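(* Any non-adaptive one-sided tester for submodularity of functions $f:\{0,1\}^n\to\mathbb{R}$ requires $\Omega(\sqrt{n})$ queries. Any adaptive one-sided tester for submodularity requires $\Omega(\log n)$ queries.
   Context: $f$ is submodular if $f(x+\mathbf{e}_i)-f(x)\ge f(y+\mathbf{e}_i)-f(y)$ for all $i$ and $x\le y$ with $x_i=y_i=0$. $f$ is $\epsilon$-far from submodular if every submodular $g$ differs from $f$ on more than an $\epsilon$ fraction of points. A one-sided tester for submodularity (with proximity parameter $\epsilon$) is a randomized algorithm with query access to $f$ that answers YES with probability $1$ if $f$ is submodular and answers NO with probability at least $2/3$ if $f$ is $\epsilon$-far from submodular. It is non-adaptive if its queries do not depend on answers to previous queries. *)

(* Defs.v *)
From HB Require Import structures.
From mathcomp Require Import all_boot all_order all_algebra.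
From mathcomp Require Import all_classical all_reals all_analysis.
From mathcomp Require Import Rstruct Rstruct_topology.
From Stdlib Require Import Rdefinitions.

Set Implicit Arguments.
Unset Strict Implicit.
Unset Printing Implicit Defensive.

Import Order.TTheory GRing.Theory Num.Theory.
Local Open Scope classical_set_scope.
Local Open Scope ring_scope.

Notation RR := Rdefinitions.R.

(* A point of the hypercube {0,1}^n (true = 1). *)
Definition point (n : nat) := {ffun 'I_n -> bool}.

(* x + e_i  (only used when x_i = 0) *)
Definition setbit n (x : point n) (i : 'I_n) : point n :=
  [ffun j => (j == i) || x j].

Definition submodular n (f : point n -> RR) : Prop :=
  forall (i : 'I_n) (x y : point n),
    (forall j, x j ==> y j) -> x i = false -> y i = false ->
    f (setbit y i) - f y <= f (setbit x i) - f x.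

Definition eps_far n (eps : RR) (f : point n -> RR) : Prop :=
  forall g : point n -> RR, submodular g ->
    eps * (2 ^ n)%:R < (#|[set x : point n | f x != g x]|)%:R.

(* A deterministic (possibly adaptive) query algorithm: the next query point is
   a function of the answers received so far (the number of answers tells the
   step); the final decision (true = YES) is a function of all the answers. *)
Record alg (n : nat) := Alg {
  qry : seq RR -> point n;
  dec : seq RR -> bool }.

Fixpoint run n (Q : seq RR -> point n) (f : point n -> RR) (k : nat) : seq RR :=
  match k with
  | 0 => [::]
  | k'.+1 => let a := run Q f k' in rcons a (f (Q a))
  end.

Definition accepts n (A : alg n) (q : nat) (f : point n -> RR) : bool :=
  dec A (run (qry A) f q).

Definition nonadaptive n (A : alg n) : Prop :=
  forall s t : seq RR, size s = size t -> qry A s = qry A t.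

(* A randomized algorithm is a family of deterministic algorithms T w indexed
   by a random seed w drawn from a probability space (Omega, P).
   one_sided_tester P T q eps : it makes q queries, is a one-sided tester for
   submodularity with proximity parameter eps. *)
Definition one_sided_tester n (d : measure_display) (Omega : measurableType d)
    (P : probability Omega RR) (T : Omega -> alg n) (q : nat) (eps : RR) : Prop :=
  (forall f : point n -> RR, measurable [set w | accepts (T w) q f]) /\
  (forall f : point n -> RR, submodular f ->
      P [set w | accepts (T w) q f] = 1%E) /\
  (forall f : point n -> RR, eps_far eps f ->
      ((2 / 3 : RR)%:E <= P [set w | ~~ accepts (T w) q f])%E).

(* Main.v *)
Require Import Defs.
From HB Require Import structures.
From mathcomp Require Import all_boot all_order all_algebra.
From mathcomp Require Import all_classical all_reals all_analysis.
From mathcomp Require Import Rstruct Rstruct_topology.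
From mathcomp Require Import measurable_realfun.
From mathcomp Require Import lra zify.
Import Defs.

Set Implicit Arguments.
Unset Strict Implicit.
Unset Printing Implicit Defensive.
Import Order.TTheory GRing.Theory Num.Theory.
Local Close Scope classical_set_scope.
Local Open Scope ring_scope.

Section Comb.
Variable n : nat.
Implicit Types x y u v s a b : point n.

Definition ham x y : nat := #|[set j | x j != y j]|.
Definition wtn x : nat := #|[set j | x j]|.
Definition wt x : RR := (wtn x)%:R.

Lemma ham_tri u v s : (ham v s <= ham u s + ham u v)%N.
Proof.
rewrite /ham addnC.
have h := (leq_card_setU [set j | u j != v j] [set j | u j != s j]).1.
set X := #|_ :|: _| in h. have : (#|[set j | v j != s j]| <= X)%N. rewrite /X.
apply: subset_leq_card.  apply/fintype.subsetP => j; rewrite !inE.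
by case: (u j); case: (v j); case: (s j).
move=> h2; exact: leq_trans h2 h.
Qed.

Lemma ham_sym u v : ham u v = ham v u.
Proof. by rewrite /ham; apply: eq_card => j; rewrite !inE eq_sym. Qed.

Lemma ham_xx u : ham u u = 0%N.
Proof. by rewrite /ham; apply/eqP; rewrite cards_eq0; apply/eqP/setP => j; rewrite !inE eqxx. Qed.

Lemma ham0 u v : ham u v = 0%N -> u = v.
Proof.
move=> /eqP; rewrite cards_eq0 => /eqP H; apply/ffunP => j.
move/setP: H => /(_ j); rewrite !inE; by case: (u j); case: (v j).
Qed.

Lemma wtn_setbit x k : x k = false -> wtn (setbit x k) = (wtn x).+1.
Proof.
move=> xk; rewrite /wtn.
have -> : [set j | setbit x k j] = k |: [set j | x j].
  by apply/setP => j; rewrite !inE /setbit ffunE.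
by rewrite cardsU1 inE xk.
Qed.

Lemma wt_setbit x k : x k = false -> wt (setbit x k) = wt x + 1.
Proof. by move=> xk; rewrite /wt wtn_setbit // -addn1 natrD. Qed.

Lemma wtn_le x y : (forall j, x j ==> y j) -> wtn y = (wtn x + ham x y)%N.
Proof.
move=> xy; rewrite /wtn /ham -(cardsID [set j | x j] [set j | y j]).
congr (_ + _)%N; apply: eq_card => j; rewrite !inE; have := xy j;
by case: (x j); case: (y j).
Qed.

Lemma ham_setbit x y k : (ham (setbit x k) (setbit y k) <= ham x y)%N.
Proof.
apply: subset_leq_card; apply/fintype.subsetP => j; rewrite !inE /setbit !ffunE.
by case: (j == k).
Qed.

Lemma ham_setbit1 x k : (ham (setbit x k) x <= 1)%N.
Proof.
rewrite -(cards1 k); apply: subset_leq_card; apply/fintype.subsetP => j; rewrite !inE /setbit !ffunE.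
by case: (j == k) => //=; rewrite eqxx.
Qed.

Variable S1 : {set point n}.
Definition Mx u : nat := \max_(s in S1) (3 - ham u s)%N.
Definition sig u : RR := (Mx u)%:R / 3.

Lemma Mx_le3 u : (Mx u <= 3)%N.
Proof. by apply/bigmax_leqP => s _; rewrite leq_subr. Qed.

Lemma Mx_lip u v : (Mx u <= Mx v + ham u v)%N.
Proof.
apply/bigmax_leqP => s sS.
have := @leq_bigmax_cond _ (fun s => s \in S1) (fun s => (3 - ham v s)%N) _ sS.
have := ham_tri u v s. rewrite -/(Mx v). lia.
Qed.

Lemma sig_lip u v : sig u - sig v <= (ham u v)%:R / 3.
Proof.
rewrite /sig -mulrBl ler_pM2r ?invr_gt0 ?ltr0n //.
have := Mx_lip u v; rewrite -(ler_nat RR) natrD => h.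
by rewrite lerBlDl.
Qed.

Lemma sig_ge0 u : 0 <= sig u.
Proof. by rewrite /sig divr_ge0 ?ler0n. Qed.
Lemma sig_le1 u : sig u <= 1.
Proof.
rewrite /sig ler_pdivrMr ?ltr0n // mul1r.
by have := Mx_le3 u; rewrite -(ler_nat RR).
Qed.

Lemma sig_in a : a \in S1 -> sig a = 1.
Proof.
move=> aS; rewrite /sig.
suff -> : Mx a = 3%N by rewrite divff // pnatr_eq0.
apply/eqP; rewrite eqn_leq Mx_le3 /=.
by have := @leq_bigmax_cond _ (fun s => s \in S1) (fun s => (3 - ham a s)%N) _ aS; rewrite ham_xx.
Qed.

Lemma sig_far a : (forall s, s \in S1 -> (3 <= ham a s)%N) -> sig a = 0.
Proof.
move=> h; rewrite /sig.
suff -> : Mx a = 0%N by rewrite mul0r.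
apply/eqP; rewrite -leqn0; apply/bigmax_leqP => s sS.
by have := h s sS; rewrite -subn_eq0 => /eqP ->.
Qed.

End Comb.
Section G.
Variable n : nat.
Local Notation pt := (point n.+1).
Definition gfun (S1 : {set pt}) (x : pt) : RR :=
  - (wt x) ^+ 2 + 3 * ((x ord0)%:R * sig S1 x).

Lemma sig_lip1 (S1 : {set pt}) x k : `|sig S1 (setbit x k) - sig S1 x| <= 1/3.
Proof.
have h1 := ham_setbit1 x k; rewrite -(ler_nat RR) in h1.
have := sig_lip S1 (setbit x k) x; have := sig_lip S1 x (setbit x k).
rewrite ham_sym => a b; rewrite ler_norml; apply/andP; split.
  have : (ham (setbit x k) x)%:R / 3 <= 1 / 3 :> RR by rewrite ler_pM2r.
  lra.
have : (ham (setbit x k) x)%:R / 3 <= 1 / 3 :> RR by rewrite ler_pM2r.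
lra.
Qed.

Lemma g_sub S1 : submodular (gfun S1).
Proof.
move=> k x y xy xk yk; rewrite /gfun !wt_setbit //.
have wy : wt y = wt x + (ham x y)%:R by rewrite /wt (wtn_le xy) natrD.
have d0 : 0 <= (ham x y)%:R :> RR by rewrite ler0n.
have e0 : forall z : pt, z ord0 = false -> ((z ord0)%:R : RR) = 0 by move=> z ->.
case: (eqVneq k ord0) => [ek | kn].
  subst k; rewrite !ffunE eqxx /= (e0 x xk) (e0 y yk).
  have hl : sig S1 (setbit y ord0) - sig S1 (setbit x ord0) <= (ham x y)%:R / 3.
    apply: le_trans (sig_lip _ _ _) _; rewrite ler_pM2r // ler_nat ham_sym.
    exact: ham_setbit.
  rewrite wy !mul1r; lra.
have ex : setbit x k ord0 = x ord0 by rewrite /setbit ffunE eq_sym (negbTE kn).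
have ey : setbit y k ord0 = y ord0 by rewrite /setbit ffunE eq_sym (negbTE kn).
rewrite ex ey.
have [hd|hd] := eqVneq (ham x y) 0%N.
  by move/ham0: hd => ->.
have d1 : 1 <= (ham x y)%:R :> RR by rewrite ler1n lt0n.
have := sig_lip1 S1 x k; have := sig_lip1 S1 y k.
rewrite !ler_norml => /andP [a1 a2] /andP [b1 b2].
rewrite wy.
case: (x ord0); case: (y ord0) => /=; lra.
Qed.
End G.
Lemma card_bigcup_le (T I : finType) (A : {pred I}) (F : I -> {set T}) :
  (#|\bigcup_(y in A) F y| <= \sum_(y in A) #|F y|)%N.
Proof.
apply: (big_ind2 (fun (X : {set T}) (m : nat) => #|X| <= m)%N).
- by rewrite cards0.
- move=> X a Y b hX hY; apply: leq_trans (leq_card_setU X Y).1 _.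
  exact: leq_add.
- by [].
Qed.

Section F.
Variable n : nat.
Local Notation pt := (point n.+1).
Definition fi (i : 'I_n.+1) (x : pt) : RR := - (wt x) ^+ 2 + 3 * ((x i && x ord0)%:R).

Definition sq (i : 'I_n.+1) (y : pt) : {set pt} :=
  [set z : pt | [forall j, (j != i) ==> (j != ord0) ==> (z j == y j)]].

Lemma card_sq i y : (#|sq i y| <= 4)%N.
Proof.
have -> : 4%N = #|{: bool * bool}| by rewrite card_prod card_bool.
apply: (@leq_card_in _ _ (fun z : pt => (z i, z ord0))).
move=> z1 z2; rewrite !inE => /forallP h1 /forallP h2 [] e1 e2.
apply/ffunP => j; case: (eqVneq j i) => [-> // | ji].
case: (eqVneq j ord0) => [-> // | j0].
have := h1 j; have := h2 j; rewrite ji j0 /= => /eqP -> /eqP -> //.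
Qed.

Lemma exists_diff i (g : pt -> RR) : i != ord0 -> submodular g ->
  forall x : pt, exists y, fi i y != g y /\ x \in sq i y.
Proof.
move=> i0 gs x.
pose z : pt := [ffun j => (j != i) && (j != ord0) && x j].
have zi : z i = false by rewrite ffunE eqxx.
have z0 : z ord0 = false by rewrite ffunE eqxx andbF.
pose p2 := setbit z i. pose p3 := setbit z ord0. pose p4 := setbit p3 i.
have p3i : p3 i = false by rewrite /p3 /setbit ffunE (negbTE i0) zi.
have insq : forall p : pt, (forall j, j != i -> j != ord0 -> p j = z j) -> x \in sq i p.
  move=> p hp; rewrite inE; apply/forallP => j; apply/implyP => ji; apply/implyP => j0.
  by rewrite hp // ffunE ji j0.
have hp2 : forall j, j != i -> j != ord0 -> p2 j = z j.
  by move=> j ji j0; rewrite /p2 /setbit ffunE (negbTE ji).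
have hp3 : forall j, j != i -> j != ord0 -> p3 j = z j.
  by move=> j ji j0; rewrite /p3 /setbit ffunE (negbTE j0).
have hp4 : forall j, j != i -> j != ord0 -> p4 j = z j.
  by move=> j ji j0; rewrite /p4 /setbit ffunE (negbTE ji) hp3.
case: (eqVneq (fi i z) (g z)) => [e1|]; last by exists z; split => //; exact: insq.
case: (eqVneq (fi i p2) (g p2)) => [e2|]; last by exists p2; split => //; exact: insq.
case: (eqVneq (fi i p3) (g p3)) => [e3|]; last by exists p3; split => //; exact: insq.
case: (eqVneq (fi i p4) (g p4)) => [e4|]; last by exists p4; split => //; exact: insq.
exfalso.
have := gs i z p3.
have le : forall j, z j ==> p3 j by move=> j; rewrite /p3 /setbit !ffunE; case: (j == ord0); rewrite /= ?implybT ?implybb.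
move=> /(_ le zi p3i); rewrite -/p2 -/p4 -e1 -e2 -e3 -e4 /fi.
rewrite /p4 /p2 /p3 !wt_setbit // ?p3i //.
have sb1 : forall (w : pt) k, setbit w k k = true by move=> w k; rewrite /setbit ffunE eqxx.
have sb2 : forall (w : pt) k j, j != k -> setbit w k j = w j.
  by move=> w k j jk; rewrite /setbit ffunE (negbTE jk).
have i0' : ord0 != i by rewrite eq_sym.
rewrite !sb1 (sb2 _ _ _ i0') sb1 (sb2 _ _ _ i0') zi z0 /=.
lra.
Qed.

Lemma fi_far i : i != ord0 -> eps_far (1/8) (fi i).
Proof.
move=> i0 g gs.
set D := [set x | fi i x != g x].
have cov : [set: pt] \subset \bigcup_(y in D) sq i y.
  apply/fintype.subsetP => x _; have [y [hy hx]] := exists_diff i0 gs x.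
  by apply/bigcupP; exists y; rewrite // inE.
have h1 := subset_leq_card cov.
have h2 := card_bigcup_le D (sq i).
have h3 : (\sum_(y in D) #|sq i y| <= \sum_(y in D) 4)%N by apply: leq_sum => y _; exact: card_sq.
rewrite sum_nat_const in h3.
rewrite cardsT card_ffun card_bool card_ord in h1.
have : (2 ^ n.+1 <= #|D| * 4)%N by apply: leq_trans h1 (leq_trans h2 h3).
rewrite -(ler_nat RR) natrM => h.
have hp : 0 < (2 ^ n.+1)%:R :> RR by rewrite ltr0n expn_gt0.
have -> : PeanoNat.Nat.pow 2 n.+1 = (2 ^ n.+1)%N.
  elim: n.+1 => // k IH; by rewrite expnS -IH.
have -> : #|[set x | fi i x != g x]%classic| = #|D|.
  by apply: eq_card => x; rewrite /D inE; apply/idP/idP; rewrite in_setE.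
lra.
Qed.
End F.
Lemma size_run n (Q : seq RR -> point n) f k : size (run Q f k) = k.
Proof. by elim: k => //= k IH; rewrite size_rcons IH. Qed.

Lemma run_agree n (Q : seq RR -> point n) (f g : point n -> RR) q :
  (forall k, (k < q)%N -> f (Q (run Q f k)) = g (Q (run Q f k))) ->
  run Q g q = run Q f q.
Proof.
move=> h; suff : forall k, (k <= q)%N -> run Q g k = run Q f k by apply.
elim=> // k IH kq /=; rewrite IH ?(ltnW kq) //; congr rcons; rewrite h //.
Qed.

Section Cw.
Variable n : nat.
Local Notation pt := (point n.+1).

Definition Cw (U : {set pt}) : {set 'I_n.+1} :=
  [set i | [exists a in U, exists b in U, (a i != b i) && (ham a b < 3)%N]].

Lemma card_Cw U : (#|Cw U| <= 2 * #|U| ^ 2)%N.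
Proof.
pose A := [pred p : pt * pt | (p \in finset.setX U U) && (ham p.1 p.2 < 3)%N].
have sub : Cw U \subset \bigcup_(p in A) [set j | p.1 j != p.2 j].
  apply/fintype.subsetP => i; rewrite inE => /existsP [a /andP [aU /existsP [b /andP [bU /andP [ab hab]]]]].
  apply/bigcupP; exists (a, b); last by rewrite inE.
  by rewrite inE /= finset.in_setX aU bU.
apply: leq_trans (subset_leq_card sub) _.
apply: leq_trans (card_bigcup_le _ _) _.
have : (\sum_(p in A) #|[set j | p.1 j != p.2 j]| <= \sum_(p in A) 2)%N.
  by apply: leq_sum => p; rewrite inE => /andP [_ h]; rewrite -ltnS.
move=> h; apply: leq_trans h _; rewrite sum_nat_const mulnC leq_mul2l /=.
have : A \subset finset.setX U U by apply/fintype.subsetP => p /andP [].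
by move/subset_leq_card; rewrite cardsX expnS expn1.
Qed.

Lemma ext_agree (U : {set pt}) i : i \notin Cw U ->
  forall a, a \in U -> fi i a = gfun [set b in U | b i] a.
Proof.
move=> iC a aU; rewrite /fi /gfun; congr (_ + 3 * _).
case: (a ord0); rewrite ?andbF ?mul0r //= mul1r.
case ai: (a i).
  by rewrite sig_in // inE aU ai.
rewrite sig_far //.
move=> s; rewrite inE => /andP [sU si]; rewrite leqNgt; apply/negP => hs.
move/negP: iC; apply; rewrite inE; apply/existsP; exists a; rewrite aU /=.
by apply/existsP; exists s; rewrite sU ai si /=.
Qed.
End Cw.
Section Core.
Local Open Scope classical_set_scope.
Variable n : nat.
Local Notation pt := (point n.+1).

Lemma core d (Omega : measurableType d) (P : probability Omega RR)
  (T : Omega -> alg n.+1) (q : nat) (U : Omega -> {set pt}) (m : nat) :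
  one_sided_tester P T q (1/8) ->
  (forall w i k, (k < q)%N -> qry (T w) (run (qry (T w)) (fi i) k) \in U w) ->
  (forall w, (#|Cw (U w)| <= m)%N) ->
  2/3 * n%:R <= m%:R :> RR.
Proof.
move=> [mA [hsub hfar]] hU hC.
pose Rej (f : pt -> RR) := ~` [set w | accepts (T w) q f].
have eR : forall f, [set w | ~~ accepts (T w) q f] = Rej f.
  move=> f; apply/seteqP; split => w /=; by move/negP.
have mR : forall f, measurable (Rej f) by move=> f; exact: measurableC.
have R0 : forall f, submodular f -> P (Rej f) = 0%E.
  by move=> f fs; rewrite probability_setC // hsub // subee.
pose N := foldr (fun S acc => Rej (gfun S) `|` acc) set0 (enum {: {set pt}}).
have hN : forall r : seq {set pt}, measurable (foldr (fun S acc => Rej (gfun S) `|` acc) set0 r)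
    /\ P (foldr (fun S acc => Rej (gfun S) `|` acc) set0 r) = 0%E.
  elim=> [|S r [mr Pr]] /=; first by split; [exact: measurable0 | exact: measure0].
  split; first exact: measurableU.
  apply/le_anti/andP; split; last exact: measure_ge0.
  set X := foldr _ _ r in mr Pr *.
  have h : (P (Rej (gfun S) `|` X) <= P (Rej (gfun S)) + P X)%E := measureU2 P (mR (gfun S)) mr.
  by rewrite Pr R0 ?adde0 in h; last exact: g_sub.
have inN : forall S, Rej (gfun S) `<=` N.
  move=> S; rewrite /N; have : S \in enum {: {set pt}} by rewrite mem_enum.
  elim: (enum _) => // S' r IH; rewrite inE => /orP [/eqP -> | /IH h] /=.
    by move=> w hw; left.
  by move=> w /h hw; right.
have [mN PN] := hN (enum {: {set pt}}).
pose I := predC1 (ord0 : 'I_n.+1).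
pose A i := Rej (fi i) `\` N.
have mAi : forall i, measurable (A i) by move=> i; exact: measurableD.
have PA : forall i, I i -> ((2/3)%:E <= P (A i))%E.
  move=> i Ii; have h := hfar (fi i) (fi_far Ii); rewrite eR in h.
  have e : P (Rej (fi i)) = (P (Rej (fi i) `\` N) + P (Rej (fi i) `&` N))%E := measureDI P (mR (fi i)) mN.
  have z : P (Rej (fi i) `&` N) = 0%E.
    apply/le_anti/andP; split; last exact: measure_ge0.
    rewrite -PN; apply: le_measure; rewrite ?inE //; try exact: measurableI; try by move=> w [].
  by rewrite e z adde0 in h.
have key : forall w i, A i w -> i \in Cw (U w).
  move=> w i [rw nw]; apply: contraT => iC; exfalso; apply: nw.
  apply: (inN [set b in U w | b i]).
  move: rw; rewrite /Rej /accepts /=.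
  rewrite (@run_agree _ (qry (T w)) (fi i) (gfun [set b in U w | b i])) //.
  move=> k kq; apply: ext_agree iC _ _; exact: hU.
have pw : forall w, \sum_(i in I) (\1_(A i) w : RR) <= m%:R.
  move=> w.
  apply: (@le_trans _ _ (\sum_(i in I) ((i \in Cw (U w)) : nat)%:R)).
    apply: ler_sum => i _; rewrite indicE.
    case: (boolP (w \in A i)) => h; last by rewrite ler0n.
    by rewrite key // -in_setE.
  rewrite -natr_sum ler_nat; apply: leq_trans (hC w).
  rewrite -big_mkcondr /= sum1_card.
  by apply: subset_leq_card; apply/fintype.subsetP => i /andP [].
have mf : forall i, measurable_fun setT (fun w => (\1_(A i) w : RR)%:E).
  by move=> i; apply/measurable_EFinP; exact: measurable_indic.
have i1 : (\int[P]_(w in setT) (\sum_(i <- enum I) (\1_(A i) w : RR)%:E)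
    = \sum_(i <- enum I) P (A i))%E.
  rewrite ge0_integral_sum //; try (by move=> i w _; rewrite lee_fin indicE ler0n).
  by apply: eq_bigr => i _; rewrite integral_indic // setIT.
have i2 : (\int[P]_(w in setT) (\sum_(i <- enum I) (\1_(A i) w : RR)%:E)
    <= \int[P]_(w in setT) (cst (m%:R : RR)%:E) w)%E.
  apply: ge0_le_integral => //; try (by move=> w _; apply: sume_ge0 => i _; rewrite lee_fin indicE ler0n);
   try exact: emeasurable_sum; try exact: measurable_cst.
  by move=> w _; rewrite sumEFin lee_fin big_enum /=; exact: pw.
rewrite integral_cst // in i2.
have pT : P [set: Omega] = 1%E := probability_setT P.
have i2' : (\int[P]_(w in setT) (\sum_(i <- enum I) (\1_(A i) w : RR)%:E)
    <= (m%:R)%:E * P [set: Omega])%E by exact: i2.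
rewrite pT mule1 i1 in i2'.
have i3 : (\sum_(i <- enum I) (2/3 : RR)%:E <= \sum_(i <- enum I) P (A i))%E.
  by rewrite !big_enum /=; apply: lee_sum => i Ii; exact: PA.
rewrite sumEFin big_enum sumr_const cardC1 card_ord /= in i3.
have := le_trans i3 i2'; rewrite lee_fin mulr_natr //.
Qed.
End Core.
Section Tree.
Variable n : nat.
Local Notation pt := (point n.+1).
Fixpoint Tr (Q : seq RR -> pt) (k : nat) : seq (seq RR) :=
  match k with
  | 0 => [:: [::]]
  | k'.+1 => let t := Tr Q k' in
      t ++ map (fun a => rcons a (- (wt (Q a)) ^+ 2)) t
        ++ map (fun a => rcons a (- (wt (Q a)) ^+ 2 + 3)) t
  end.

Lemma size_Tr Q k : size (Tr Q k) = (3 ^ k)%N.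
Proof. by elim: k => //= k IH; rewrite !size_cat !size_map IH expnS; lia. Qed.

Lemma Tr_mono Q k k' : (k <= k')%N -> {subset Tr Q k <= Tr Q k'}.
Proof.
move=> kk; elim: k' kk => [|k' IH]; first by rewrite leqn0 => /eqP ->.
rewrite leq_eqVlt => /orP [/eqP -> //| /IH h] a /h /= ha.
by rewrite mem_cat ha.
Qed.

Lemma run_Tr Q i k : run Q (fi i) k \in Tr Q k.
Proof.
elim: k => [|k IH] /=; first by rewrite inE.
rewrite !mem_cat /fi.
case: (_ && _) => /=.
  by rewrite mulr1 (map_f (fun a => rcons a (- wt (Q a) ^+ 2 + 3)) IH) !orbT.
by rewrite mulr0 addr0 (map_f (fun a => rcons a (- wt (Q a) ^+ 2)) IH) orbT.
Qed.
End Tree.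

Lemma num_sqrt (n q : nat) : (1 <= n)%N -> 2/3 * n%:R <= 2 * (q ^ 2)%:R :> RR ->
  1/3 * Num.sqrt ((n.+1)%:R : RR) <= q%:R.
Proof.
move=> n1 h.
have hn : (n.+1)%:R <= (3 * q%:R) ^+ 2 :> RR.
  have : 1 <= n%:R :> RR by rewrite ler1n.
  rewrite natrX in h; rewrite -natr1; move: h; nra.
have := ler_wsqrtr hn; rewrite sqrtr_sqr ger0_norm ?mulr_ge0 ?ler0n //.
move=> hs; have := sqrtr_ge0 ((n.+1)%:R : RR); lra.
Qed.

Lemma num_ln (n q : nat) : (4 <= n)%N -> 2/3 * n%:R <= 2 * (9 ^ q)%:R :> RR ->
  1/8 * ln ((n.+1)%:R : RR) <= q%:R.
Proof.
move=> n4 h.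
have h1 : (n <= 3 * 9 ^ q)%N.
  rewrite -(ler_nat RR) natrM; move: h; lra.
have q1 : (1 <= q)%N.
  by case: q h h1 => [|q] h h1 //; rewrite expn0 in h1; lia.
have X9 : (9 <= 9 ^ q)%N by rewrite -{1}(expn1 9) leq_pexp2l.
have h2 : (n.+1 <= 9 ^ (q * 2))%N.
  rewrite expnM expnS expn1; move: h1 X9; set X := (9 ^ q)%N; nia.
have e4 : 9 <= expR 4 :> RR.
  have -> : 4 = 2 + 2 :> RR by lra.
  rewrite exp.expRD; have := expR_ge1Dx (2 : RR); nra.
have h3 : (n.+1)%:R <= expR ((q * 2)%:R * 4) :> RR.
  rewrite expRM_natl; apply: le_trans (_ : (9 ^ (q * 2))%:R <= _).
    by rewrite ler_nat.
  rewrite natrX; apply: lerXn2r; rewrite ?nnegrE ?ler0n ?expR_ge0 //.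
have : ln (n.+1)%:R <= (q * 2)%:R * 4 :> RR.
  by rewrite -[X in _ <= X]expRK ler_ln ?posrE ?ltr0n ?expR_gt0.
rewrite natrM; lra.
Qed.
Local Open Scope classical_set_scope.

Theorem corollary3 :
  (exists eps : RR, 0 < eps /\ exists c : RR, 0 < c /\ exists N : nat,
    forall (n q : nat), (N <= n)%N ->
    forall (d : measure_display) (Omega : measurableType d)
           (P : probability Omega RR) (T : Omega -> alg n),
      (forall w, nonadaptive (T w)) ->
      one_sided_tester P T q eps ->
      c * Num.sqrt (n%:R) <= q%:R)
  /\
  (exists eps : RR, 0 < eps /\ exists c : RR, 0 < c /\ exists N : nat,
    forall (n q : nat), (N <= n)%N ->
    forall (d : measure_display) (Omega : measurableType d)
           (P : probability Omega RR) (T : Omega -> alg n),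
      one_sided_tester P T q eps ->
      c * ln (n%:R) <= q%:R).
Proof.
split.
  exists (1/8); split; first lra.
  exists (1/3); split; first lra.
  exists 2%N => n q n2 d Omega P T hna ht.
  case: n n2 T hna ht => [//|n] n2 T hna ht.
  have h := @core n d Omega P T q (fun w => [set qry (T w) (nseq (val k) (0%R : RR)) | k : 'I_q]) (2 * q ^ 2) ht.
  apply: num_sqrt => //.
  rewrite -natrM; apply: h.
    move=> w i k kq; apply/imsetP; exists (Ordinal kq) => //=; apply: hna.
    by rewrite size_run size_nseq.
  move=> w; apply: leq_trans (card_Cw _) _; rewrite leq_mul2l /=.
  have hU : (#|[set qry (T w) (nseq (val k) (0%R : RR)) | k : 'I_q]| <= q)%N.
    by apply: leq_trans (leq_imset_card _ _) _; rewrite card_ord.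
  by rewrite !expnS !expn0 !muln1 leq_mul.
exists (1/8); split; first lra.
exists (1/8); split; first lra.
exists 5%N => n q n5 d Omega P T ht.
case: n n5 T ht => [//|n] n5 T ht.
have h := @core n d Omega P T q (fun w => [set x in map (qry (T w)) (Tr (qry (T w)) q)]) (2 * 9 ^ q) ht.
apply: num_ln => //.
rewrite -natrM; apply: h.
  move=> w i k kq; rewrite inE; apply: map_f; apply: (Tr_mono (ltnW kq)); exact: run_Tr.
move=> w; apply: leq_trans (card_Cw _) _; rewrite leq_mul2l /=.
have hU : (#|[set x in map (qry (T w)) (Tr (qry (T w)) q)]| <= 3 ^ q)%N.
  by rewrite cardsE -(size_Tr (qry (T w)) q) -(size_map (qry (T w))) card_size.
have -> : (9 ^ q = 3 ^ q * 3 ^ q)%N by rewrite -expnMn.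
by rewrite !expnS !expn0 !muln1 leq_mul.
Qed.
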